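(* Let $n\ge k\ge 1$ be integers, $i\in\{1,\ldots,n\}$, let $H\sim\text{Hyp}(n,i,k)$, and fix an integer $m\in \{0,1,\ldots,\min\{i,k\}\}$. Then \[ \mathbb{P}(H \ge m) = \frac{\binom{k}{m}\cdot \binom{i}{m}}{\binom{n}{m}} \cdot \mathbb{E}\left(\frac{1}{\binom{Z_m+m}{m}} \right), \] where $Z_m\sim\text{Hyp}(n-m,i-m,k-m)$.
   Context: $\text{Hyp}(N,a,b)$ (for integers $0\le a\le N$, $0\le b\le N$) denotes the hypergeometric distribution: the number of black marbles in a sample without replacement of size $b$ from an urn with $a$ black and $N-a$ white marbles, i.e. $\mathbb{P}(Z=j)=\binom{a}{j}\binom{N-a}{b-j}/\binom{N}{b}$ for $j\in\{\max\{0,b-(N-a)\},\ldots,\min\{a,b\}\}$ (in degenerate cases with $a=0$ or $b=0$ this is the point mass at $0$). *)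

(* Defs.v *)
From mathcomp Require Import all_boot all_order all_algebra.
Unset Printing Implicit Defensive.
Import Order.TTheory GRing.Theory Num.Theory.
Local Open Scope ring_scope.

(* pmf of Hyp(N,a,b) at j: C(a,j) C(N-a,b-j) / C(N,b), and 0 for j > b
   (nat binomials already vanish off the remaining support bounds). *)
Definition hyp_pmf (R : realFieldType) (N a b j : nat) : R :=
  if (j <= b)%N then
    ('C(a, j) * 'C(N - a, b - j))%:R / ('C(N, b))%:R
  else 0.

Definition hyp_prob_ge (R : realFieldType) (N a b m : nat) : R :=
  \sum_(j < b.+1 | (m <= j)%N) hyp_pmf R N a b j.

Definition hyp_expect (R : realFieldType) (N a b : nat) (f : nat -> R) : R :=
  \sum_(j < b.+1) hyp_pmf R N a b j * f j.

(* Main.v *)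
Require Import Defs.
From mathcomp Require Import all_boot all_order all_algebra.
From mathcomp Require Import ring zify.
Import Order.TTheory GRing.Theory Num.Theory.
Local Open Scope ring_scope.

Lemma trinom i j m : (m <= j)%N -> (j <= i)%N ->
  ('C(i,j)*'C(j,m) = 'C(i,m)*'C(i-m,j-m))%N.
Proof.
move=> hmj hji.
have hmi : (m <= i)%N by apply: leq_trans hji.
apply/eqP; rewrite -(@eqn_pmul2r (m`! * (j-m)`! * (i-j)`!)); last by rewrite !muln_gt0 !fact_gt0.
have e1 := bin_fact hji; have e2 := bin_fact hmj; have e3 := bin_fact hmi.
have hh : (j - m <= i - m)%N by rewrite leq_sub2r.
have e4 := bin_fact hh. have e5 : (i - m - (j - m) = i - j)%N by rewrite subnBA // subnK.
rewrite e5 in e4.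
have -> : ('C(i,j)*'C(j,m) * (m`! * (j-m)`! * (i-j)`!) = 'C(i,j) * ('C(j,m)*(m`!*(j-m)`!)) * (i-j)`!)%N by ring.
have -> : ('C(i,m)*'C(i-m,j-m) * (m`! * (j-m)`! * (i-j)`!) = 'C(i,m) * ( m`! * ('C(i-m,j-m)*((j-m)`!*(i-j)`!))))%N by ring.
by rewrite e2 e4 -mulnA e1 e3.
Qed.

Lemma trinom' i j m : (m <= j)%N -> (m <= i)%N ->
  ('C(i,j)*'C(j,m) = 'C(i,m)*'C(i-m,j-m))%N.
Proof.
move=> hmj hmi; case: (leqP j i) => hji; first exact: trinom.
rewrite (bin_small hji) mul0n (@bin_small (i - m)) ?muln0 //.
by rewrite -(ltn_add2r m) !subnK.
Qed.

Theorem lemma3 (R : realFieldType) (n k i m : nat)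
  (hk1 : (1 <= k)%N) (hkn : (k <= n)%N) (hi1 : (1 <= i)%N) (hin : (i <= n)%N)
  (hm : (m <= minn i k)%N) :
  hyp_prob_ge R n i k m =
    ('C(k, m)%:R * 'C(i, m)%:R / 'C(n, m)%:R) *
    hyp_expect R (n - m) (i - m) (k - m) (fun z => ('C(z + m, m)%:R)^-1).
Proof.
move: hm; rewrite leq_min => /andP [hmi hmk].
have hmn : (m <= n)%N by apply: leq_trans hkn.
rewrite /hyp_prob_ge /hyp_expect.
have -> : \sum_(j < k.+1 | (m <= j)%N) hyp_pmf R n i k j =
   \sum_(m <= j < k.+1) hyp_pmf R n i k j by rewrite big_geq_mkord.
rewrite -{1}(add0n m) big_addn.
have -> : (k.+1 - m = (k - m).+1)%N by rewrite subSn.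
rewrite big_mkord mulr_sumr.
apply: eq_bigr => -[z hz] _ /=.
have hzk : (z <= k - m)%N by [].
have hjk : (z + m <= k)%N by move: hzk hmk; clear; lia.
rewrite /hyp_pmf hzk hjk.
have ea := trinom' i (z + m) m (leq_addl z m) hmi.
have eb := trinom' n k m hmk hmn.
rewrite addnK in ea.
have e1 : (n - m - (i - m) = n - i)%N by rewrite subnBA // subnK.
have e2 : (k - m - z = k - (z + m))%N by rewrite addnC subnDA.
rewrite e1 e2.
have nz : forall a b, (b <= a)%N -> ('C(a, b)%:R : R) != 0.
  by move=> a b hab; rewrite pnatr_eq0 -lt0n bin_gt0.
have ha : ('C(i, z + m)%:R : R) = 'C(i,m)%:R * 'C(i-m,z)%:R / 'C(z+m,m)%:R.
  by rewrite -natrM -ea natrM mulfK // nz // leq_addl.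
have hb : ('C(n, k)%:R : R) = 'C(n,m)%:R * 'C(n-m,k-m)%:R / 'C(k,m)%:R.
  by rewrite -natrM -eb natrM mulfK // nz.
rewrite !natrM ha hb.
have h1 := nz _ _ (leq_addl z m); have h2 := nz _ _ hmk; have h3 := nz _ _ hmi.
have h4 := nz _ _ hmn; have h5 := nz (n - m)%N (k - m)%N (leq_sub2r m hkn).
move: h1 h2 h3 h4 h5.
move: ('C(i, m)%:R : R) ('C(i - m, z)%:R : R) ('C(z + m, m)%:R : R) ('C(n - i, k - (z + m))%:R : R).
move: ('C(n, m)%:R : R) ('C(n - m, k - m)%:R : R) ('C(k, m)%:R : R).
move=> a b c d e f g h1 h2 h3 h4 h5.
by field; rewrite ?h1 ?h2 ?h3 ?h4 ?h5.
Qed.
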